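(* Let $k\in K\setminus\{\mathbf{0},\mathbf{1}\}$ and let $\varphi=\psi\,\widetilde{U}\,\xi$, or $\varphi=\square\psi$, or $\varphi=\psi U\xi$, with $\psi,\xi\in k\text{-}stLTL(K,AP)$. Then for every $w\in(\mathcal{P}(AP))^{\omega}$: $(\|\varphi\|,w)\geq k$ iff $w\models\varphi_{b}$.
   Context: $(K,+,\cdot,Val^{\omega},\mathbf{0},\mathbf{1})$ is an idempotent ordered totally generalized product $\omega$-valuation monoid: $(K,+,\mathbf{0})$ is a complete idempotent monoid whose natural order ($k\leq k'$ iff $k'=k'+k$) is total; $Val^{\omega}$ maps infinite sequences over finite subsets of $K$ to $K$, with $Val^{\omega}((k_i)_i)=\mathbf{0}$ whenever some $k_i=\mathbf{0}$ and $Val^{\omega}(\mathbf{1}^{\omega})=\mathbf{1}$; $\cdot$ has $\mathbf{0}$ absorbing and $\mathbf{1}$ neutral; $\sum_I(k\cdot\mathbf{1})=k\cdot\sum_I\mathbf{1}$; $Val^{\omega}$ distributes over finite sums $\sum_{i_j\in I_j}k_{i_j}$ (over finite $L\subseteq K$) whenever for each $j$ all $k_{i_j}$ lie in $L\setminus\{\mathbf{0},\mathbf{1}\}$ or all lie in $\{\mathbf{0},\mathbf{1}\}$. Moreover $Val^{\omega}(\mathbf{1},k_1,k_2,\ldots)=Val^{\omega}(k_1,k_2,\ldots)$, $k=Val^{\omega}(k,\mathbf{1},\mathbf{1},\ldots)$, $k\leq\mathbf{1}$ for all $k$, and $Val^{\omega}(k_0,k_1,\ldots)\geq k$ whenever $k_i\geq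 k$ for all $i$. $AP$ is a finite set of atomic propositions. Weighted LTL formulas over $AP$ and $K$ have semantics $\|\cdot\|$ in $K^{(\mathcal{P}(AP))^{\omega}}$: $(\|k'\|,w)=k'$; $(\|a\|,w)=\mathbf{1}$ if $a\in w(0)$ else $\mathbf{0}$ (dually for $\lnot a$); $\vee$ is $+$, $\wedge$ is $\cdot$; $(\|\bigcirc\varphi\|,w)=(\|\varphi\|,w_{\geq1})$; $(\|\varphi U\psi\|,w)=\sum_{i\geq0}Val^{\omega}((\|\varphi\|,w_{\geq0}),\ldots,(\|\varphi\|,w_{\geq i-1}),(\|\psi\|,w_{\geq i}),\mathbf{1},\mathbf{1},\ldots)$; $(\|\square\varphi\|,w)=Val^{\omega}((\|\varphi\|,w_{\geq i}))_{i\geq0}$; $\varphi\widetilde{U}\psi:=\square\varphi\vee(\varphi U\psi)$. $sbLTL(K,AP)$ is given by $\varphi::=true\mid a\mid\lnot a\mid\varphi\vee\varphi\mid\varphi\wedge\varphi\mid\bigcirc\varphi\mid\varphi\widetilde{U}\varphi\mid\square\varphi$ ($true=\mathbf{1}$); its semantics are $\{\mathbf{0},\mathbf{1}\}$-valued and coincide with classical LTL satisfaction. $k\text{-}stLTL(K,AP)$ consists of formulas $\bigvee_{1\leq i\leq n}(k_i\wedge\varphi_i)$ with $k_i\geq k$, $k_i\notin\{\mathbf{0},\mathbf{1}\}$, $\varphi_i\in sbLTL(K,AP)$. For such $\varphi$, $\varphi_b:=\bigvee_i\varphi_i$; for $\varphi=\psi\widetilde{U}\xi$, $\square\psi$, $\psi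 U\xi$ with $\psi,\xi\in k\text{-}stLTL(K,AP)$, $\varphi_b$ is respectively $\psi_b\widetilde{U}\xi_b$, $\square\psi_b$, $\psi_bU\xi_b$, read as classical LTL formulas, and $w\models\varphi_b$ means classical satisfaction at position 0. *)

(* Defs.v *)
From Stdlib Require Import List.
From mathcomp Require Import all_boot.
Set Implicit Arguments. Unset Strict Implicit. Unset Printing Implicit Defensive.

Definition fin_range (K : Type) (f : nat -> K) : Prop :=
  exists L : list K, forall i, List.In (f i) L.

(* Idempotent ordered totally generalized product omega-valuation monoid. *)
Record valmonoid := ValMonoid {
  carrier :> Type;
  kplus : carrier -> carrier -> carrier;
  kzero : carrier;
  kone : carrier;
  kmul : carrier -> carrier -> carrier;
  ksum : forall I : Type, (I -> carrier) -> carrier;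
  Val : (nat -> carrier) -> carrier;
  kplusA : forall a b c, kplus a (kplus b c) = kplus (kplus a b) c;
  kplusC : forall a b, kplus a b = kplus b a;
  kplus0 : forall a, kplus kzero a = a;
  ksum_empty : forall f : Empty_set -> carrier, ksum f = kzero;
  ksum_unit : forall f : unit -> carrier, ksum f = f tt;
  ksum_bool : forall f : bool -> carrier, ksum f = kplus (f true) (f false);
  ksum_bij : forall (I J : Type) (g : I -> J) (h : J -> I) (f : J -> carrier),
      (forall i, h (g i) = i) -> (forall j, g (h j) = j) ->
      ksum (fun i => f (g i)) = ksum f;
  ksum_partition : forall (J : Type) (I : J -> Type) (f : {j : J & I j} -> carrier),
      ksum f = ksum (fun j => ksum (fun i : I j => f (existT I j i)));
  kplus_idem : forall a, kplus a a = a;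
  (* the natural order is total *)
  kle_total : forall a b, b = kplus b a \/ a = kplus a b;
  Val_zero : forall f, fin_range f -> (exists i, f i = kzero) -> Val f = kzero;
  Val_one : Val (fun _ => kone) = kone;
  kmul0l : forall a, kmul kzero a = kzero;
  kmul0r : forall a, kmul a kzero = kzero;
  kmul1l : forall a, kmul kone a = a;
  kmul1r : forall a, kmul a kone = a;
  ksum_mul1 : forall (I : Type) (a : carrier),
      ksum (fun _ : I => kmul a kone) = kmul a (ksum (fun _ : I => kone));
  Val_distr : forall (n : nat -> nat) (kk : forall j, 'I_(n j) -> carrier)
      (L : list carrier),
      (forall j i, List.In (kk j i) L) ->
      (forall j, (forall i, kk j i <> kzero /\ kk j i <> kone) \/
                 (forall i, kk j i = kzero \/ kk j i = kone)) ->
      Val (fun j => ksum (kk j)) =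
      ksum (fun c : (forall j, 'I_(n j)) => Val (fun j => kk j (c j)));
  Val_cons1 : forall f, fin_range f ->
      Val (fun i => if i is i'.+1 then f i' else kone) = Val f;
  Val_head : forall a, a = Val (fun i => if i is 0 then a else kone);
  kle_one : forall a, kone = kplus kone a;
  Val_ge : forall (f : nat -> carrier) a, fin_range f ->
      (forall i, f i = kplus (f i) a) -> Val f = kplus (Val f) a
}.

Definition kle (K : valmonoid) (a b : K) : Prop := b = kplus b a.

Section Syntax.
Variables (K : valmonoid) (AP : finType).

Definition word := nat -> {set AP}.
Definition shift (i : nat) (w : word) : word := fun n => w (i + n).

Inductive wLTL :=
| WConst of K
| WAtom of AP
| WNAtom of AP
| WOr of wLTL & wLTL
| WAnd of wLTL & wLTL
| WNext of wLTL
| WUntil of wLTL & wLTL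
| WBox of wLTL.

Definition WWUntil (p q : wLTL) : wLTL := WOr (WBox p) (WUntil p q).
Definition WTrue : wLTL := WConst (kone K).

Fixpoint sem (p : wLTL) (w : word) : K :=
  match p with
  | WConst c => c
  | WAtom a => if a \in w 0 then kone K else kzero K
  | WNAtom a => if a \in w 0 then kzero K else kone K
  | WOr p q => kplus (sem p w) (sem q w)
  | WAnd p q => kmul (sem p w) (sem q w)
  | WNext p => sem p (shift 1 w)
  | WUntil p q => ksum (fun i : nat =>
        Val (fun j => if j < i then sem p (shift j w)
                      else if j == i then sem q (shift i w) else kone K))
  | WBox p => Val (fun i => sem p (shift i w))
  end.

Inductive LTL :=
| LTrue
| LAtom of AP
| LNAtom of AP
| LOr of LTL & LTL
| LAnd of LTL & LTL
| LNext of LTL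
| LUntil of LTL & LTL
| LBox of LTL.

Fixpoint lsat (p : LTL) (w : word) : Prop :=
  match p with
  | LTrue => True
  | LAtom a => a \in w 0
  | LNAtom a => a \notin w 0
  | LOr p q => lsat p w \/ lsat q w
  | LAnd p q => lsat p w /\ lsat q w
  | LNext p => lsat p (shift 1 w)
  | LUntil p q => exists i, lsat q (shift i w) /\ forall j, j < i -> lsat p (shift j w)
  | LBox p => forall i, lsat p (shift i w)
  end.

(* sbLTL(K,AP) as a syntactic fragment of weighted LTL *)
Inductive is_sb : wLTL -> Prop :=
| sb_true : is_sb WTrue
| sb_atom a : is_sb (WAtom a)
| sb_natom a : is_sb (WNAtom a)
| sb_or p q : is_sb p -> is_sb q -> is_sb (WOr p q)
| sb_and p q : is_sb p -> is_sb q -> is_sb (WAnd p q)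
| sb_next p : is_sb p -> is_sb (WNext p)
| sb_wuntil p q : is_sb p -> is_sb q -> is_sb (WWUntil p q)
| sb_box p : is_sb p -> is_sb (WBox p).

(* reading an sbLTL formula as a classical LTL formula (true = 1 |-> LTrue) *)
Fixpoint to_ltl (p : wLTL) : LTL :=
  match p with
  | WConst _ => LTrue
  | WAtom a => LAtom a
  | WNAtom a => LNAtom a
  | WOr p q => LOr (to_ltl p) (to_ltl q)
  | WAnd p q => LAnd (to_ltl p) (to_ltl q)
  | WNext p => LNext (to_ltl p)
  | WUntil p q => LUntil (to_ltl p) (to_ltl q)
  | WBox p => LBox (to_ltl p)
  end.

(* k-stLTL formulas  \/_{1<=i<=n} (k_i /\ phi_i), n >= 1, given as the
   nonempty list (k_1,phi_1) :: ps *)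
Definition stdata := ((K * wLTL) * list (K * wLTL))%type.

Definition st_list (s : stdata) : list (K * wLTL) := s.1 :: s.2.

Definition is_kst (k : K) (s : stdata) : Prop :=
  List.Forall (fun p : K * wLTL =>
     kle k p.1 /\ p.1 <> kzero K /\ p.1 <> kone K /\ is_sb p.2) (st_list s).

Definition st_w (s : stdata) : wLTL :=
  foldl (fun acc p => WOr acc (WAnd (WConst p.1) p.2))
        (WAnd (WConst s.1.1) s.1.2) s.2.

(* phi_b := \/_i phi_i *)
Definition st_b (s : stdata) : LTL :=
  foldl (fun acc p => LOr acc (to_ltl p.2)) (to_ltl s.1.2) s.2.

End Syntax.

(* Main.v *)
Require Import Defs.
From Stdlib Require Import List Classical ClassicalEpsilon FunctionalExtensionality ProofIrrelevance.
From mathcomp Require Import all_boot.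
Set Implicit Arguments. Unset Strict Implicit. Unset Printing Implicit Defensive.

Section S.
Variable K : valmonoid.

Lemma ksum_const0 (I : Type) : ksum (fun _ : I => kzero K) = kzero K.
Proof. have := ksum_mul1 I (kzero K). by rewrite !kmul0l. Qed.

Section Part.
Variables (I : Type) (i0 : I).
Definition PT (b : bool) : Type := if b return Type then (unit : Type) else {i : I | i <> i0}.
Definition pg (s : {b : bool & PT b}) : I :=
  match s with existT b x =>
    (if b as b' return PT b' -> I then fun _ => i0 else fun x => proj1_sig x) x end.
Definition ph (i : I) : {b : bool & PT b} :=
  match excluded_middle_informative (i = i0) with
  | left _ => existT PT true tt
  | right H => existT PT false (exist _ i H) end.
Lemma phg s : ph (pg s) = s.
Proof.
case: s => [[|] x] /=; rewrite /ph.
- case: (excluded_middle_informative (i0 = i0)) => // _. by case: x.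
- case: x => i H /=. case: (excluded_middle_informative (i = i0)) => [e|H'] //.
  by rewrite (proof_irrelevance _ H H').
Qed.
Lemma pgh i : pg (ph i) = i.
Proof. rewrite /ph. by case: (excluded_middle_informative (i = i0)) => [->|H]. Qed.
End Part.

Lemma ksum_ge (I : Type) (f : I -> K) (i0 : I) :
  exists r, ksum f = kplus (f i0) r.
Proof.
exists (ksum (fun t : PT i0 false => f (pg (existT (PT i0) false t)))).
rewrite -(@ksum_bij _ _ _ (@pg I i0) (@ph I i0) f (@phg I i0) (@pgh I i0)).
rewrite (ksum_partition (fun s => f (pg s))) ksum_bool.
congr kplus.
exact: (ksum_unit (fun t : unit => f (pg (existT (PT i0) true t)))).
Qed.

Lemma kle_plusr (k a r : K) : kle k a -> kle k (kplus a r).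
Proof. rewrite /kle => H. by rewrite -kplusA (kplusC r k) kplusA -H. Qed.

Lemma kle_plusl (k a r : K) : kle k a -> kle k (kplus r a).
Proof. rewrite kplusC. exact: kle_plusr. Qed.

Lemma kplus_cases (a b : K) : kplus a b = a \/ kplus a b = b.
Proof.
case: (kle_total a b) => H.
- right. by rewrite kplusC -H.
- left. by rewrite -H.
Qed.

Lemma kle_plus_inv (k a b : K) : kle k (kplus a b) -> kle k a \/ kle k b.
Proof. by case: (kplus_cases a b) => ->; auto. Qed.

Lemma kle_one' (k : K) : kle k (kone K).
Proof. exact: kle_one. Qed.

Lemma kplus1l (r : K) : kplus (kone K) r = kone K.
Proof. by rewrite -kle_one. Qed.

Definition U (f h : nat -> K) := ksum (fun i : nat =>
  Val (fun j => if j < i then f j else if j == i then h i else kone K)).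

Lemma untilZero f h L : (forall j, In (f j) L) -> (forall i, In (h i) L) ->
  (forall i, (exists j, j < i /\ f j = kzero K) \/ h i = kzero K) -> U f h = kzero K.
Proof.
move=> Hf Hh H. rewrite /U.
have -> : (fun i : nat => Val (fun j => if j < i then f j else if j == i then h i else kone K))
   = fun _ => kzero K.
  apply: functional_extensionality => i. apply: Val_zero.
  exists (kone K :: L) => j. case: ifP => _; first by right.
  case: ifP => _; [by right|by left].
  case: (H i) => [[j [Hj Hz]]|Hz].
  - exists j. by rewrite Hj.
  - exists i. by rewrite ltnn eqxx.
exact: ksum_const0.
Qed.

Lemma untilGe k f h L : (forall j, In (f j) L) -> (forall i, In (h i) L) ->
  forall i, kle k (h i) -> (forall j, j < i -> kle k (f j)) -> kle k (U f h).
Proof.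
move=> Hf Hh i Hi Hj. rewrite /U.
have [r ->] := ksum_ge (fun i : nat => Val (fun j => if j < i then f j else if j == i then h i else kone K)) i.
apply: kle_plusr. apply: Val_ge.
- exists (kone K :: L) => j. case: ifP => _; first by right.
  case: ifP => _; [by right|by left].
- move=> j /=. case: ifP => Hji; first exact: Hj.
  case: ifP => _; first exact: Hi. exact: kle_one'.
Qed.

Lemma box01 (f : nat -> K) (P : nat -> Prop) :
  (forall i, (P i -> f i = kone K) /\ (~ P i -> f i = kzero K)) ->
  ((forall i, P i) -> Val f = kone K) /\ (~ (forall i, P i) -> Val f = kzero K).
Proof.
move=> H; split => HP.
- have -> : f = fun _ => kone K.
    apply: functional_extensionality => i. exact: (proj1 (H i)).
  exact: Val_one.
- have [i Hi] := not_all_ex_not _ _ HP.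
  apply: Val_zero; last by exists i; apply: (proj2 (H i)).
  exists [:: kzero K; kone K] => j. case: (classic (P j)) => Hj.
  + rewrite (proj1 (H j) Hj). by right; left.
  + rewrite (proj2 (H j) Hj). by left.
Qed.

Lemma until01 f h (P Q : nat -> Prop) :
  (forall i, (P i -> f i = kone K) /\ (~ P i -> f i = kzero K)) ->
  (forall i, (Q i -> h i = kone K) /\ (~ Q i -> h i = kzero K)) ->
  ((exists i, Q i /\ forall j, j < i -> P j) -> U f h = kone K) /\
  (~ (exists i, Q i /\ forall j, j < i -> P j) -> U f h = kzero K).
Proof.
move=> Hf Hh; split.
- move=> [i [Hi Hj]]. rewrite /U.
  have [r ->] := ksum_ge (fun i : nat => Val (fun j => if j < i then f j else if j == i then h i else kone K)) i.
  have -> : (fun j => if j < i then f j else if j == i then h i else kone K) = fun _ => kone K.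
    apply: functional_extensionality => j. case: ifP => Hji.
    + exact: (proj1 (Hf j) (Hj j Hji)).
    + case: ifP => _ //. exact: (proj1 (Hh i) Hi).
  by rewrite Val_one kplus1l.
- move=> Hn. apply: (@untilZero _ _ [:: kzero K; kone K]).
  + move=> j. case: (classic (P j)) => Hj.
    * rewrite (proj1 (Hf j) Hj). by right; left.
    * rewrite (proj2 (Hf j) Hj). by left.
  + move=> j. case: (classic (Q j)) => Hj.
    * rewrite (proj1 (Hh j) Hj). by right; left.
    * rewrite (proj2 (Hh j) Hj). by left.
  + move=> i. case: (classic (Q i)) => Hi.
    * left. have : ~ (forall j, j < i -> P j) by move=> Hj; apply: Hn; exists i.
      move=> /not_all_ex_not [j Hj]. exists j.
      have [Hji HPj] := imply_to_and _ _ Hj. split => //. exact: (proj2 (Hf j) HPj).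
    * right. exact: (proj2 (Hh i) Hi).
Qed.

Lemma or01 (a b : K) (A B : Prop) :
  (A -> a = kone K) /\ (~ A -> a = kzero K) ->
  (B -> b = kone K) /\ (~ B -> b = kzero K) ->
  (A \/ B -> kplus a b = kone K) /\ (~ (A \/ B) -> kplus a b = kzero K).
Proof.
move=> [A1 A0] [B1 B0]; split.
- case=> H. by rewrite A1 // kplus1l. by rewrite B1 // kplusC kplus1l.
- move=> H. rewrite A0; last tauto. rewrite B0; last tauto. exact: kplus0.
Qed.

Variable AP : finType.

Lemma sb_bin (p : wLTL K AP) : is_sb p -> forall w,
  (lsat (to_ltl p) w -> sem p w = kone K) /\ (~ lsat (to_ltl p) w -> sem p w = kzero K).
Proof.
elim => {p} [|a|a|p q _ IHp _ IHq|p q _ IHp _ IHq|p _ IHp|p q _ IHp _ IHq|p _ IHp] w /=.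
- by split.
- split => H; first by rewrite H. by case: ifP.
- split => H; first by rewrite (negbTE H). case: ifP => // /negbT HH. by exfalso; apply: H.
- exact: or01.
- have [A1 A0] := IHp w. have [B1 B0] := IHq w. split.
  + move=> [Ha Hb]. by rewrite A1 // B1 // kmul1l.
  + move=> H. case: (classic (lsat (to_ltl p) w)) => Ha.
    * rewrite B0; last tauto. exact: kmul0r.
    * rewrite A0 //. exact: kmul0l.
- exact: IHp.
- apply: or01.
  + have := @box01 (fun i => sem p (shift i w)) (fun i => lsat (to_ltl p) (shift i w)) (fun i => IHp (shift i w)).
    done.
  + have := @until01 (fun i => sem p (shift i w)) (fun i => sem q (shift i w))
       (fun i => lsat (to_ltl p) (shift i w)) (fun i => lsat (to_ltl q) (shift i w))
       (fun i => IHp (shift i w)) (fun i => IHq (shift i w)).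
    done.
- have := @box01 (fun i => sem p (shift i w)) (fun i => lsat (to_ltl p) (shift i w)) (fun i => IHp (shift i w)).
  done.
Qed.

Definition Good (k : K) (L : list K) (phi : wLTL K AP) (b : LTL AP) :=
  forall w, (lsat b w -> kle k (sem phi w)) /\ (~ lsat b w -> sem phi w = kzero K)
            /\ In (sem phi w) L.

Lemma st_fold k (L : list K) (ps : list (K * wLTL K AP)) : forall acc accb,
  List.Forall (fun p : K * wLTL K AP =>
     kle k p.1 /\ p.1 <> kzero K /\ p.1 <> kone K /\ is_sb p.2) ps ->
  (forall p, List.In p ps -> List.In p.1 L) -> In (kzero K) L ->
  Good k L acc accb ->
  Good k L (foldl (fun (acc : wLTL K AP) (p : K * wLTL K AP) => WOr acc (WAnd (WConst AP p.1) p.2)) acc ps)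
           (foldl (fun (acc : LTL AP) (p : K * wLTL K AP) => LOr acc (to_ltl p.2)) accb ps).
Proof.
elim: ps => [|[c q] ps IH] acc accb HF Hin H0 Hacc //=.
inversion HF as [|x l [Hk [_ [_ Hsb]]] HF' Heq]; subst.
apply: IH => //.
- move=> p Hp. apply: Hin. by right.
- move=> w /=. have [A1 [A0 Ain]] := Hacc w. have [Q1 Q0] := sb_bin Hsb w.
  split; [|split].
  + case=> [Ha|Hq]; first by apply: kle_plusr; auto.
    rewrite Q1 // kmul1r. exact: kle_plusl.
  + move=> Hn. rewrite A0; last tauto. rewrite Q0; last tauto. by rewrite kmul0r kplus0.
  + case: (kplus_cases (sem acc w) (kmul c (sem q w))) => ->; first done.
    case: (classic (lsat (to_ltl q) w)) => Hq.
    * rewrite Q1 // kmul1r. exact: (Hin (c, q) (or_introl erefl)).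
    * by rewrite Q0 // kmul0r.
Qed.

Definition Lst (s : stdata K AP) : list K := kzero K :: map fst (st_list s).

Lemma st_good k (s : stdata K AP) : is_kst k s -> Good k (Lst s) (st_w s) (st_b s).
Proof.
case: s => [[c q] ps]. rewrite /is_kst /st_list /= => HF.
inversion HF as [|x l [Hk [_ [_ Hsb]]] HF' Heq]; subst.
apply: st_fold => //.
- move=> p Hp. rewrite /Lst /st_list /=. right. right. exact: in_map.
- by left.
- move=> w /=. have [Q1 Q0] := sb_bin Hsb w. split; [|split].
  + move=> H. by rewrite Q1 // kmul1r.
  + move=> H. by rewrite Q0 // kmul0r.
  + case: (classic (lsat (to_ltl q) w)) => Hq.
    * rewrite Q1 // kmul1r. by right; left.
    * rewrite Q0 // kmul0r. by left.
Qed.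

Lemma kle_not0 k : k <> kzero K -> ~ kle k (kzero K).
Proof. move=> Hk H. apply: Hk. by rewrite H kplus0. Qed.

Lemma box_main k L phi b : k <> kzero K -> Good k L phi b ->
  forall w, kle k (sem (WBox phi) w) <-> lsat (LBox b) w.
Proof.
move=> Hk HG w /=. split.
- move=> H. apply: NNPP => Hn. have [i Hi] := not_all_ex_not _ _ Hn.
  apply: (kle_not0 Hk). rewrite -(@Val_zero K (fun i => sem phi (shift i w))) //.
  + exists L => j. exact: (proj2 (proj2 (HG _))).
  + exists i. exact: (proj1 (proj2 (HG _))).
- move=> H. apply: Val_ge.
  + exists L => j. exact: (proj2 (proj2 (HG _))).
  + move=> i. exact: (proj1 (HG _) (H i)).
Qed.

Lemma until_main k L1 L2 phi1 phi2 b1 b2 : k <> kzero K ->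
  Good k L1 phi1 b1 -> Good k L2 phi2 b2 ->
  forall w, kle k (sem (WUntil phi1 phi2) w) <-> lsat (LUntil b1 b2) w.
Proof.
move=> Hk G1 G2 w /=. split.
- move=> H. apply: NNPP => Hn. apply: (kle_not0 Hk).
  rewrite -(@untilZero (fun j => sem phi1 (shift j w)) (fun i => sem phi2 (shift i w)) (L1 ++ L2)) //.
  + move=> j. apply: in_or_app. left. exact: (proj2 (proj2 (G1 _))).
  + move=> j. apply: in_or_app. right. exact: (proj2 (proj2 (G2 _))).
  + move=> i. case: (classic (lsat b2 (shift i w))) => Hi.
    * left. have : ~ (forall j, j < i -> lsat b1 (shift j w)) by move=> Hj; apply: Hn; exists i.
      move=> /not_all_ex_not [j Hj]. exists j.
      have [Hji HPj] := imply_to_and _ _ Hj. split => //. exact: (proj1 (proj2 (G1 _))).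
    * right. exact: (proj1 (proj2 (G2 _))).
- move=> [i [Hi Hj]].
  apply: (@untilGe k (fun j => sem phi1 (shift j w)) (fun i => sem phi2 (shift i w)) (L1 ++ L2)).
  + move=> j. apply: in_or_app. left. exact: (proj2 (proj2 (G1 _))).
  + move=> j. apply: in_or_app. right. exact: (proj2 (proj2 (G2 _))).
  + exact: (proj1 (G2 _) Hi).
  + move=> j Hji. exact: (proj1 (G1 _) (Hj j Hji)).
Qed.

Lemma wuntil_main k L1 L2 phi1 phi2 b1 b2 : k <> kzero K ->
  Good k L1 phi1 b1 -> Good k L2 phi2 b2 ->
  forall w, kle k (sem (WWUntil phi1 phi2) w) <-> lsat (LOr (LBox b1) (LUntil b1 b2)) w.
Proof.
move=> Hk G1 G2 w.
change (sem (WWUntil phi1 phi2) w) with (kplus (sem (WBox phi1) w) (sem (WUntil phi1 phi2) w)).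
change (lsat (LOr (LBox b1) (LUntil b1 b2)) w) with (lsat (LBox b1) w \/ lsat (LUntil b1 b2) w).
rewrite -(box_main Hk G1) -(until_main Hk G1 G2). split.
- exact: kle_plus_inv.
- case=> H; [exact: kle_plusr | exact: kle_plusl].
Qed.
End S.

Theorem lemma7 (K : valmonoid) (AP : finType) (k : K)
  (hk0 : k <> kzero K) (hk1 : k <> kone K)
  (psi xi : stdata K AP) (hpsi : is_kst k psi) (hxi : is_kst k xi) :
  forall w : word AP,
    (kle k (sem (WWUntil (st_w psi) (st_w xi)) w) <->
       lsat (LOr (LBox (st_b psi)) (LUntil (st_b psi) (st_b xi))) w) /\
    (kle k (sem (WBox (st_w psi)) w) <-> lsat (LBox (st_b psi)) w) /\
    (kle k (sem (WUntil (st_w psi) (st_w xi)) w) <->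
       lsat (LUntil (st_b psi) (st_b xi)) w).
Proof.
move=> w. have G1 := st_good hpsi. have G2 := st_good hxi.
split; [|split].
- exact: wuntil_main hk0 G1 G2 w.
- exact: box_main hk0 G1 w.
- exact: until_main hk0 G1 G2 w.
Qed.
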